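(* In the reachability strategy-improvement algorithm described in the context, let $\gamma_i$ and $\gamma_{i+1}$ be the player-1 selectors obtained at iterations $i$ and $i+1$. If $\gamma_i$ is proper, then $\gamma_{i+1}$ is also proper.
   Context: Concurrent game structure $G=(S,M,\Gamma_1,\Gamma_2,\delta)$: finite states, finite moves, nonempty move sets $\Gamma_i(s)$, $\delta(s,a_1,a_2)\in\mathrm{Distr}(S)$ (simultaneous independent moves). Selectors assign to each state a distribution on available moves; $\overline{\xi}$ is the memoryless strategy playing $\xi$ forever; $\Pr_s^{\pi_1,\pi_2}$ is the induced measure on plays; $\mathrm{Reach}(X)$: plays visiting $X$. $\mathrm{val}_1^{\pi_1}(\mathrm{Reach}(T))(s)=\inf_{\pi_2}\Pr_s^{\pi_1,\pi_2}(\mathrm{Reach}(T))$, $\mathrm{val}_1(\mathrm{Reach}(T))=\sup_{\pi_1}\mathrm{val}_1^{\pi_1}(\mathrm{Reach}(T))$. For a valuation $v:S\to[0,1]$: $\mathrm{Pre}_{\xi_1,\xi_2}(v)(s)=\sum_{a,b}\sum_tv(t)\delta(s,a,b)(t)\xi_1(s)(a)\xi_2(s)(b)$, $\mathrm{Pre}_{1:\xi_1}(v)(s)=\inf_{\xi_2}\mathrm{Pre}_{\xi_1,\xi_2}(v)(s)$, $\mathrm{Pre}_1(v)(s)=\sup_{\xi_1}\mathrm{Pre}_{1:\xi_1}(v)(s)$. Fix $T\subseteq S$, $W_2=\{s:\mathrm{val}_1(\mathrm{Reach}(T))(s)=0\}$; all states of $T\cup W_2$ are absorbing. A player-1 strategy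 is proper if, against every player-2 strategy, from every $s\in S\setminus(T\cup W_2)$, $T\cup W_2$ is reached with probability 1; a selector $\xi$ is proper if $\overline{\xi}$ is. The algorithm: $\gamma_0$ is the uniform selector on $\Gamma_1(s)$, $v_i=\mathrm{val}_1^{\overline{\gamma}_i}(\mathrm{Reach}(T))$. At iteration $i$: $I=\{s\in S\setminus(T\cup W_2):\mathrm{Pre}_1(v_i)(s)>v_i(s)\}$; $\xi_1$ is a selector with $\mathrm{Pre}_{1:\xi_1}(v_i)(s)=\mathrm{Pre}_1(v_i)(s)$ for $s\in I$; $\gamma_{i+1}(s)=\gamma_i(s)$ for $s\notin I$ and $\gamma_{i+1}(s)=\xi_1(s)$ for $s\in I$; stop when $I=\emptyset$. *)

(* Defs.v *)
From HB Require Import structures.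
From mathcomp Require Import all_boot all_order all_algebra.
From mathcomp Require Import all_classical all_reals.
Set Implicit Arguments. Unset Strict Implicit. Unset Printing Implicit Defensive.
Import Order.TTheory GRing.Theory Num.Theory.
Local Open Scope classical_set_scope.
Local Open Scope ring_scope.

Section ConcurrentGames.
Context {R : realType} {S M : finType}.

Definition is_distr (X : finType) (d : {ffun X -> R}) : Prop :=
  (forall x, 0 <= d x) /\ \sum_(x : X) d x = 1.

Definition is_move_distr (G : S -> {set M}) (s : S) (d : {ffun M -> R}) : Prop :=
  is_distr d /\ (forall a, a \notin G s -> d a = 0).

Definition is_cgs (G1 G2 : S -> {set M}) (delta : S -> M -> M -> {ffun S -> R}) : Prop :=
  (forall s, G1 s != finset.set0) /\ (forall s, G2 s != finset.set0) /\
  (forall s a b, a \in G1 s -> b \in G2 s -> is_distr (delta s a b)).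

Definition selector := S -> {ffun M -> R}.
Definition is_selector (G : S -> {set M}) (xi : selector) : Prop :=
  forall s, is_move_distr G s (xi s).

(* General (history-dependent, randomized) strategies: given the history
   of previously visited states h and the current state s, a distribution
   over moves. *)
Definition strategy := seq S -> S -> {ffun M -> R}.
Definition is_strategy (G : S -> {set M}) (pi : strategy) : Prop :=
  forall h s, is_move_distr G s (pi h s).

Definition memoryless (xi : selector) : strategy := fun _ s => xi s.

Variable delta : S -> M -> M -> {ffun S -> R}.

Fixpoint reach_within (X : {set S}) (pi1 pi2 : strategy) (n : nat)
    (h : seq S) (s : S) : R :=
  if s \in X then 1 else
  match n with
  | 0 => 0
  | n'.+1 => \sum_(a : M) \sum_(b : M) \sum_(t : S)
       pi1 h s a * pi2 h s b * delta s a b t *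
       reach_within X pi1 pi2 n' (rcons h s) t
  end.

(* Pr_s^{pi1,pi2}(Reach X): by continuity of the measure, the limit
   (= supremum, the sequence being nondecreasing) of the probabilities of
   reaching X within n steps. *)
Definition prob_reach (X : {set S}) (pi1 pi2 : strategy) (s : S) : R :=
  sup [set r | exists n, r = reach_within X pi1 pi2 n [::] s].

Definition val1_strat (G2 : S -> {set M}) (X : {set S}) (pi1 : strategy) (s : S) : R :=
  inf [set r | exists pi2, is_strategy G2 pi2 /\ r = prob_reach X pi1 pi2 s].

Definition val1 (G1 G2 : S -> {set M}) (X : {set S}) (s : S) : R :=
  sup [set r | exists pi1, is_strategy G1 pi1 /\ r = val1_strat G2 X pi1 s].

Definition pre2 (xi1 xi2 : selector) (v : S -> R) (s : S) : R :=
  \sum_(a : M) \sum_(b : M) \sum_(t : S)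
     v t * delta s a b t * xi1 s a * xi2 s b.

Definition pre1_sel (G2 : S -> {set M}) (xi1 : selector) (v : S -> R) (s : S) : R :=
  inf [set r | exists xi2, is_selector G2 xi2 /\ r = pre2 xi1 xi2 v s].

Definition pre1 (G1 G2 : S -> {set M}) (v : S -> R) (s : S) : R :=
  sup [set r | exists xi1, is_selector G1 xi1 /\ r = pre1_sel G2 xi1 v s].

Definition W2 (G1 G2 : S -> {set M}) (T : {set S}) : {set S} :=
  [set s | val1 G1 G2 T s == 0].

Definition absorbing (G1 G2 : S -> {set M}) (A : {set S}) : Prop :=
  forall s a b, s \in A -> a \in G1 s -> b \in G2 s -> delta s a b s = 1.

Definition proper_strategy (G1 G2 : S -> {set M}) (T : {set S}) (pi1 : strategy) : Prop :=
  forall pi2, is_strategy G2 pi2 ->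
  forall s, s \notin T :|: W2 G1 G2 T ->
    prob_reach (T :|: W2 G1 G2 T) pi1 pi2 s = 1.

Definition proper_selector (G1 G2 : S -> {set M}) (T : {set S}) (xi : selector) : Prop :=
  proper_strategy G1 G2 T (memoryless xi).

Definition uniform_selector (G1 : S -> {set M}) : selector :=
  fun s => [ffun a => if a \in G1 s then (#|G1 s|%:R)^-1 else 0].

Definition improve_set (G1 G2 : S -> {set M}) (T : {set S}) (v : S -> R) : {set S} :=
  [set s | (s \notin T :|: W2 G1 G2 T) && (v s < pre1 G1 G2 v s)].

(* One iteration of the algorithm, from gam (= gamma_i) to gam' (= gamma_{i+1}):
   the algorithm has not stopped (I nonempty), and gam' is gam modified on I
   by a selector xi1 attaining Pre_1(v_i) on I. *)
Definition improve_step (G1 G2 : S -> {set M}) (T : {set S})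
    (gam gam' : selector) : Prop :=
  let v := val1_strat G2 T (memoryless gam) in
  let I := improve_set G1 G2 T v in
  I != finset.set0 /\
  exists xi1, is_selector G1 xi1 /\
    (forall s, s \in I -> pre1_sel G2 xi1 v s = pre1 G1 G2 v s) /\
    (forall s, gam' s = if s \in I then xi1 s else gam s).

End ConcurrentGames.

(* Main.v *)
Require Import Defs.
From HB Require Import structures.
From mathcomp Require Import all_boot all_order all_algebra.
From mathcomp Require Import all_classical all_reals.
From mathcomp Require Import ring lra.
Import Order.TTheory GRing.Theory Num.Theory.
Local Open Scope ring_scope.
Local Open Scope ring_scope.
Set Implicit Arguments. Unset Strict Implicit. Unset Printing Implicit Defensive.

Section Aux.
Variables (R : realType) (S M : finType).
Variables (G1 G2 : S -> {set M}) (delta : S -> M -> M -> {ffun S -> R}).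
Hypothesis Hcgs : is_cgs G1 G2 delta.

Lemma term_ge0 s (d1 d2 : {ffun M -> R}) a b t :
  is_move_distr G1 s d1 -> is_move_distr G2 s d2 ->
  0 <= d1 a * d2 b * delta s a b t.
Proof.
move=> [[p1 _] z1] [[p2 _] z2].
case: (boolP (a \in G1 s)) => ha; last by rewrite z1 // !mul0r.
case: (boolP (b \in G2 s)) => hb; last by rewrite z2 // mulr0 mul0r.
case: Hcgs => _ [_ /(_ s a b ha hb) [pd _]].
by rewrite !mulr_ge0.
Qed.

Lemma inner_sum s (d1 d2 : {ffun M -> R}) a b :
  is_move_distr G1 s d1 -> is_move_distr G2 s d2 ->
  \sum_t d1 a * d2 b * delta s a b t = d1 a * d2 b.
Proof.
move=> [[p1 _] z1] [[p2 _] z2].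
rewrite -mulr_sumr.
case: (boolP (a \in G1 s)) => ha; last by rewrite z1 // !mul0r.
case: (boolP (b \in G2 s)) => hb; last by rewrite z2 // mulr0 mul0r.
case: Hcgs => _ [_ /(_ s a b ha hb) [_ ->]].
by rewrite mulr1.
Qed.

Lemma wsum1 s (d1 d2 : {ffun M -> R}) :
  is_move_distr G1 s d1 -> is_move_distr G2 s d2 ->
  \sum_a \sum_b \sum_t d1 a * d2 b * delta s a b t = 1.
Proof.
move=> H1 H2.
under eq_bigr => a _ do under eq_bigr => b _ do rewrite inner_sum //.
under eq_bigr => a _ do rewrite -mulr_sumr.
case: H2 => [[_ ->] _]; under eq_bigr => a _ do rewrite mulr1.
by case: H1 => [[_ ->] _].
Qed.

Lemma wsum_le s (d1 d2 : {ffun M -> R}) (f g : M -> M -> S -> R) :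
  is_move_distr G1 s d1 -> is_move_distr G2 s d2 ->
  (forall a b t, d1 a * d2 b * delta s a b t != 0 -> f a b t <= g a b t) ->
  \sum_a \sum_b \sum_t d1 a * d2 b * delta s a b t * f a b t <=
  \sum_a \sum_b \sum_t d1 a * d2 b * delta s a b t * g a b t.
Proof.
move=> H1 H2 Hfg.
apply: ler_sum => a _; apply: ler_sum => b _; apply: ler_sum => t _.
case: (eqVneq (d1 a * d2 b * delta s a b t) 0) => [->|hn]; first by rewrite !mul0r.
by apply: ler_wpM2l; [exact: term_ge0|exact: Hfg].
Qed.

Lemma wsum_const s (d1 d2 : {ffun M -> R}) c :
  is_move_distr G1 s d1 -> is_move_distr G2 s d2 ->
  \sum_a \sum_b \sum_t d1 a * d2 b * delta s a b t * c = c.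
Proof.
move=> H1 H2.
rewrite -[RHS]mul1r -(wsum1 H1 H2) !mulr_suml.
by apply: eq_bigr => a _; rewrite !mulr_suml; apply: eq_bigr => b _; rewrite mulr_suml.
Qed.

Lemma rw_bounds (X : {set S}) pi1 pi2 n h s :
  is_strategy G1 pi1 -> is_strategy G2 pi2 ->
  0 <= reach_within delta X pi1 pi2 n h s <= 1.
Proof.
move=> H1 H2; elim: n h s => [|n IH] h s /=; case: ifP => _ //; rewrite ?lexx ?ler01 //.
apply/andP; split.
  apply: sumr_ge0 => a _; apply: sumr_ge0 => b _; apply: sumr_ge0 => t _.
  by apply: mulr_ge0; [exact: term_ge0|case/andP: (IH (rcons h s) t)].
rewrite -[X in _ <= X](@wsum_const _ _ _ 1 (H1 h s) (H2 h s)).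
apply: wsum_le => // a b t _; by case/andP: (IH (rcons h s) t).
Qed.


Definition dirac (b : M) : {ffun M -> R} := [ffun x => (x == b)%:R].

Lemma dirac_distr s b : b \in G2 s -> is_move_distr G2 s (dirac b).
Proof.
move=> hb; split; first split.
- by move=> x; rewrite ffunE ler0n.
- rewrite (bigD1 b) //= ffunE eqxx big1 ?addr0 // => x hx.
  by rewrite ffunE (negbTE hx).
- move=> x hx; rewrite ffunE; case: eqP => // e; by rewrite e hb in hx.
Qed.

Lemma sum_dirac (d1 : {ffun M -> R}) s b (f : M -> M -> S -> R) :
  \sum_a \sum_(c : M) \sum_t d1 a * dirac b c * delta s a c t * f a c t =
  \sum_a \sum_t d1 a * delta s a b t * f a b t.
Proof.
apply: eq_bigr => a _; rewrite (bigD1 b) //= [X in _ + X]big1 ?addr0.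
  by apply: eq_bigr => t _; rewrite ffunE eqxx mulr1.
move=> b' hb; apply: big1 => t _; by rewrite ffunE (negbTE hb) mulr0 !mul0r.
Qed.

Lemma exists_choice2 (P : S -> M -> Prop) :
  (forall s, exists b, b \in G2 s /\ P s b) ->
  exists bs : S -> M, forall s, bs s \in G2 s /\ P s (bs s).
Proof. by move=> H; case: (choice H) => f Hf; exists f. Qed.

Definition memo2 (bs : S -> M) : @strategy R S M := fun _ s => dirac (bs s).

Lemma memo2_strat bs : (forall s, bs s \in G2 s) -> is_strategy G2 (memo2 bs).
Proof. by move=> H h s; apply: dirac_distr. Qed.

Definition is_trap (xi : @selector R S M) (A K : {set S}) :=
  forall s, s \in K -> s \notin A /\
    exists b, b \in G2 s /\ forall a t, xi s a != 0 -> delta s a b t != 0 -> t \in K.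

Lemma trap_zero xi (A K : {set S}) : is_selector G1 xi -> is_trap xi A K ->
  exists pi2, is_strategy G2 pi2 /\
   forall n h s, s \in K -> reach_within delta A (memoryless xi) pi2 n h s = 0.
Proof.
move=> Hxi Htr.
have H : forall s, exists b, b \in G2 s /\
   (s \in K -> forall a t, xi s a != 0 -> delta s a b t != 0 -> t \in K).
  move=> s.
  case: (boolP (s \in K)) => hs.
    have [_ [b [hb Hb]]] := Htr s hs; by exists b.
  have := (proj1 (proj2 Hcgs)) s; case/set0Pn => b hb; by exists b.
have [bs Hbs] := choice H.
exists (memo2 bs); split; first by apply: memo2_strat => s; case: (Hbs s).
elim=> [|n IH] h s hs /=; have [hA _] := Htr s hs; rewrite (negbTE hA) //.
rewrite /memoryless /memo2 sum_dirac.
apply: big1 => a _; apply: big1 => t _.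
case: (eqVneq (xi s a) 0) => [->|ha]; first by rewrite !mul0r.
case: (eqVneq (delta s a (bs s) t) 0) => [->|hd]; first by rewrite mulr0 mul0r.
by rewrite IH ?mulr0 //; case: (Hbs s) => _ /(_ hs a t ha hd).
Qed.


Fixpoint lev (xi : @selector R S M) (A : {set S}) (k : nat) : {set S} :=
  match k with
  | 0 => A
  | k'.+1 => A :|: [set s | [forall b in G2 s, [exists a, [exists t,
        (xi s a != 0) && (delta s a b t != 0) && (t \in lev xi A k')]]]]
  end.

Lemma lev_mono xi A k : lev xi A k \subset lev xi A k.+1.
Proof.
elim: k => [|k IH] /=; first exact: finset.subsetUl.
apply/fintype.subsetP => s; rewrite !inE; case/orP => [->//|] /forall_inP H.
apply/orP; right; apply/forall_inP => b hb.
have /existsP [a /existsP [t /andP [/andP [h1 h2] h3]]] := H b hb.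
by apply/existsP; exists a; apply/existsP; exists t; rewrite h1 h2 (fintype.subsetP IH).
Qed.

Lemma lev_stab xi A : exists k, lev xi A k = lev xi A k.+1.
Proof.
case: (EM (exists k, lev xi A k = lev xi A k.+1)) => // Hn.
have Hc : forall k, (k <= #|lev xi A k|)%N.
  elim=> [|k IH] //.
  have hp : lev xi A k \proper lev xi A k.+1.
    rewrite finset.properEneq lev_mono andbT; apply/eqP => e; apply: Hn; by exists k.
  exact: leq_ltn_trans IH (proper_card hp).
have := Hc #|S|.+1; have := max_card (mem (lev xi A #|S|.+1)).
move=> h1 h2; have := leq_trans h2 h1; by rewrite ltnn.
Qed.

Lemma lev_full xi A : (forall K : {set S}, K != finset.set0 -> ~ is_trap xi A K) ->
  exists k, lev xi A k = [set: S].
Proof.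
move=> Hnt; have [k Hk] := lev_stab xi A; exists k.
case: (eqVneq (~: lev xi A k) finset.set0) => [h|hne].
  by rewrite -[lev xi A k]finset.setCK h finset.setC0.
exfalso; apply: (Hnt _ hne) => s hs.
have hs' : s \notin lev xi A k.+1 by rewrite -Hk; rewrite inE in hs.
move: hs'; rewrite /= inE negb_or => /andP [hA hF].
split=> //.
rewrite ?inE in hF; have [b hb hnex] := forall_inPn hF; exists b; split=> // a t ha hd.
rewrite inE; apply/negP => ht; move/negP: hnex; apply.
by apply/existsP; exists a; apply/existsP; exists t; rewrite ha hd ht.
Qed.

Lemma fin_min (X : finType) (f : X -> R) :
  exists q, 0 < q /\ q <= 1 /\ forall x, 0 < f x -> q <= f x.
Proof.
suff [q [h1 [h2 h3]]] : exists q, 0 < q /\ q <= 1 /\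
    forall x, x \in enum X -> 0 < f x -> q <= f x.
  by exists q; split=> // ; split=> // x; apply: h3; rewrite mem_enum.
elim: (enum X) => [|y l [q [h1 [h2 h3]]]].
  by exists 1; split=> //; split.
case: (ltrP 0 (f y)) => hy.
  exists (Num.min q (f y)); split; first by rewrite lt_min h1 hy.
  split; first by rewrite ge_min h2.
  move=> x; rewrite inE; case/orP => [/eqP -> _|hx hfx]; first by rewrite ge_min lexx orbT.
  by rewrite ge_min h3.
exists q; split=> //; split=> // x; rewrite inE; case/orP => [/eqP ->|hx hfx].
  by move=> hlt; move: (lt_le_trans hlt hy); rewrite ltxx.
exact: h3.
Qed.

Lemma one_le_sum (X : finType) (F : X -> R) i0 :
  (forall i, 0 <= F i) -> F i0 <= \sum_i F i.
Proof.
move=> H; rewrite (bigD1 i0) //= lerDl; apply: sumr_ge0 => i _; exact: H.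
Qed.


Lemma sel_zero_out (xi : @selector R S M) s a :
  is_selector G1 xi -> xi s a != 0 -> a \in G1 s.
Proof.
move=> H hx; apply/negP => ha; move/eqP: hx; apply.
by case: (H s) => _ /(_ a (introN idP ha)).
Qed.

Lemma lev_bound xi A q pi2 : is_selector G1 xi -> 0 < q -> q <= 1 ->
  (forall s a b t, 0 < xi s a * delta s a b t -> q <= xi s a * delta s a b t) ->
  is_strategy G2 pi2 ->
  forall j h s, s \in lev xi A j ->
    q ^+ j <= reach_within delta A (memoryless xi) pi2 j h s.
Proof.
move=> Hxi hq0 hq1 Hq H2.
have H1 : is_strategy G1 (memoryless xi) by move=> h s; exact: Hxi.
elim=> [|j IH] h s /=; first by move=> ->; rewrite expr0.
case: (boolP (s \in A)) => hA.
  by move=> _; rewrite exprn_ile1 // ltW.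
rewrite inE (negbTE hA) /= inE => /forall_inP hF.
rewrite exchange_big /=.
have [[p2 s2] z2] := H2 h s.
rewrite -[X in X <= _]mul1r -s2 mulr_suml.
apply: ler_sum => b _.
case: (boolP (b \in G2 s)) => hb; last first.
  rewrite z2 // mul0r; apply: sumr_ge0 => a _; apply: sumr_ge0 => t _.
  apply: mulr_ge0; first by rewrite mulr0 mul0r.
  by case/andP: (rw_bounds A j (rcons h s) t H1 H2).
have /existsP [a0 /existsP [t0 /andP [/andP [ha hd] ht]]] := hF b hb.
have nonneg : forall a t, 0 <= memoryless xi h s a * pi2 h s b * delta s a b t *
      reach_within delta A (memoryless xi) pi2 j (rcons h s) t.
  move=> a t; apply: mulr_ge0; first exact: (term_ge0 _ _ _ (H1 h s) (H2 h s)).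
  by case/andP: (rw_bounds A j (rcons h s) t H1 H2).
set F := fun a t => memoryless xi h s a * pi2 h s b * delta s a b t *
      reach_within delta A (memoryless xi) pi2 j (rcons h s) t.
have hsum : F a0 t0 <= \sum_a \sum_t F a t.
  apply: le_trans (@one_le_sum M (fun a => \sum_t F a t) a0 _).
    exact: (@one_le_sum S (F a0) t0 (nonneg a0)).
  move=> a; apply: sumr_ge0 => t _; exact: nonneg.
apply: le_trans hsum; rewrite /F.
rewrite /memoryless.
have hpos : 0 < xi s a0 * delta s a0 b t0.
  rewrite lt_def mulf_neq0 //=; apply: mulr_ge0; first by case: (Hxi s) => [[+ _] _].
  have ha' := sel_zero_out Hxi ha.
  by case: Hcgs => _ [_ /(_ s a0 b ha' hb) [pd _]].
have := Hq _ _ _ _ hpos; have := IH (rcons h s) t0 ht => h1 h2.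
rewrite [_ * _ * _ * _](_ : _ = pi2 h s b *
   ((xi s a0 * delta s a0 b t0) * reach_within delta A (memoryless xi) pi2 j (rcons h s) t0)); last first.
  by rewrite /memoryless; ring.
apply: ler_wpM2l => //; rewrite exprS; apply: ler_pM => //; first exact: ltW.
exact: exprn_ge0 (ltW hq0).
Qed.


Lemma wsub s (d1 d2 : {ffun M -> R}) (f : M -> M -> S -> R) :
  is_move_distr G1 s d1 -> is_move_distr G2 s d2 ->
  1 - \sum_a \sum_b \sum_t d1 a * d2 b * delta s a b t * f a b t =
  \sum_a \sum_b \sum_t d1 a * d2 b * delta s a b t * (1 - f a b t).
Proof.
move=> H1 H2; apply/esym.
under eq_bigr => a _ do under eq_bigr => b _ do under eq_bigr => t _ do rewrite mulrBr mulr1.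
under eq_bigr => a _ do under eq_bigr => b _ do rewrite sumrB.
under eq_bigr => a _ do rewrite sumrB.
by rewrite sumrB (wsum1 H1 H2).
Qed.

Lemma rw_in (X : {set S}) pi1 pi2 n h s : s \in X -> reach_within delta X pi1 pi2 n h s = 1.
Proof. by case: n => [|n] /= ->. Qed.

Lemma nr_step (X : {set S}) pi1 pi2 c m : is_strategy G1 pi1 -> is_strategy G2 pi2 -> 0 <= c ->
  (forall h t, 1 - reach_within delta X pi1 pi2 m h t <= c) ->
  forall n h s, 1 - reach_within delta X pi1 pi2 (n + m) h s <=
                c * (1 - reach_within delta X pi1 pi2 n h s).
Proof.
move=> H1 H2 hc Hm; elim=> [|n IH] h s.
  case: (boolP (s \in X)) => hs; first by rewrite !rw_in // subrr mulr0.
  by rewrite add0n /= (negbTE hs) subr0 mulr1.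
case: (boolP (s \in X)) => hs; first by rewrite !rw_in // subrr mulr0.
rewrite addSn /= (negbTE hs) !wsub //.
rewrite mulr_sumr; apply: ler_sum => a _; rewrite mulr_sumr; apply: ler_sum => b _.
rewrite mulr_sumr; apply: ler_sum => t _.
rewrite mulrCA; apply: ler_wpM2l; first exact: term_ge0.
exact: IH.
Qed.

Lemma geom_bound (p : R) n : 0 <= p -> p <= 1 ->
  (1 - p) ^+ n * (1 + n%:R * p) <= 1.
Proof.
move=> hp0 hp1; elim: n => [|n IH]; first by rewrite expr0 mul0r addr0 mul1r.
have hx : 0 <= (1 - p) ^+ n by apply: exprn_ge0; rewrite subr_ge0.
have hy : 0 <= n%:R * p by apply: mulr_ge0 => //; exact: ler0n.
rewrite exprS -natr1.
set x := (1 - p) ^+ n in hx IH *; set y := n%:R in hy IH *.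
have -> : (1 - p) * x * (1 + (y + 1) * p) = x * (1 + y * p) - x * (p * p) * (y + 1).
  ring.
have h3 : 0 <= x * (p * p) * (y + 1).
  apply: mulr_ge0; first by apply: mulr_ge0 => //; apply: mulr_ge0.
  by rewrite /y addr_ge0 // ler0n.
lra.
Qed.


Lemma notrap_reach xi A : is_selector G1 xi ->
  (forall K : {set S}, K != finset.set0 -> ~ is_trap xi A K) ->
  forall pi2, is_strategy G2 pi2 -> forall s,
    prob_reach delta A (memoryless xi) pi2 s = 1.
Proof.
move=> Hxi Hnt pi2 H2 s.
have H1 : is_strategy G1 (memoryless xi) by move=> h s'; exact: Hxi.
have [k Hk] := lev_full Hnt.
have [q [hq0 [hq1 Hq]]] := fin_min (fun x : (S * M * M * S) =>
   xi x.1.1.1 x.1.1.2 * delta x.1.1.1 x.1.1.2 x.1.2 x.2).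
have Hq' : forall s a b t, 0 < xi s a * delta s a b t -> q <= xi s a * delta s a b t.
  by move=> s' a b t; exact: (Hq (s', a, b, t)).
set p := q ^+ k.
have hp0 : 0 < p by apply: exprn_gt0.
have hp1 : p <= 1 by apply: exprn_ile1 => //; exact: ltW.
have Hlb : forall h t, p <= reach_within delta A (memoryless xi) pi2 k h t.
  move=> h t; apply: (lev_bound Hxi hq0 hq1 Hq' H2); by rewrite Hk inE.
have Hgeo : forall m h s', 1 - reach_within delta A (memoryless xi) pi2 (m * k) h s'
                          <= (1 - p) ^+ m.
  elim=> [|m IH] h s'.
    rewrite mul0n expr0 lerBlDr lerDl.
    by case/andP: (rw_bounds A 0 h s' H1 H2).
  rewrite mulSnr.
  apply: le_trans (nr_step (c := 1 - p) H1 H2 _ _ (m * k) h s') _.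
  - by rewrite subr_ge0.
  - move=> h' t; have := Hlb h' t; lra.
  rewrite exprS; apply: ler_wpM2l; first by rewrite subr_ge0.
  exact: IH.
set E := [set r | exists n, r = reach_within delta A (memoryless xi) pi2 n [::] s]%classic.
have hE0 : (E !=set0)%classic.
  by exists (reach_within delta A (memoryless xi) pi2 0 [::] s); exists 0%N.
have hub : ubound E 1.
  apply/ubP => r [n ->]; by case/andP: (rw_bounds A n [::] s H1 H2).
have hubE : has_ubound E by exists 1.
rewrite /prob_reach -/E.
apply/eqP; rewrite eq_le; apply/andP; split; first exact: ge_sup.
rewrite leNgt; apply/negP => hlt.
have hsup0 : 0 <= sup E.
  apply: le_trans (ub_le_sup hubE _); last by exists 0%N.
  by case/andP: (rw_bounds A 0 [::] s H1 H2).
set e := 1 - sup E.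
have he : 0 < e by rewrite /e subr_gt0.
have hep : 0 < e * p by apply: mulr_gt0.
set m := Num.Def.archi_bound ((e * p)^-1).
have hm : (e * p)^-1 < m%:R by apply: archi_boundP; rewrite invr_ge0 ltW.
have hm' : 1 < m%:R * (e * p).
  by rewrite -ltr_pdivrMr // div1r.
have := Hgeo m [::] s.
have := ub_le_sup hubE (ex_intro _ (m * k)%N erefl).
have := geom_bound m (ltW hp0) hp1.
have hx : 0 <= (1 - p) ^+ m by apply: exprn_ge0; rewrite subr_ge0.
set x := (1 - p) ^+ m in hx *.
set r := reach_within _ _ _ _ _ _ _.
move=> g1 g2 g3.
have hex : e <= x by rewrite /e; lra.
have hmp : 0 <= m%:R * p by apply: mulr_ge0; [exact: ler0n | exact: ltW].
have : e * (1 + m%:R * p) <= x * (1 + m%:R * p).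
  apply: ler_wpM2r => //; lra.
have -> : e * (1 + m%:R * p) = e + m%:R * (e * p) by ring.
lra.
Qed.


Lemma pr_bounds (X : {set S}) pi1 pi2 s :
  is_strategy G1 pi1 -> is_strategy G2 pi2 ->
  0 <= prob_reach delta X pi1 pi2 s <= 1.
Proof.
move=> H1 H2.
have hub : has_ubound [set r | exists n, r = reach_within delta X pi1 pi2 n [::] s]%classic.
  exists 1; apply/ubP => r [n ->]; by case/andP: (rw_bounds X n [::] s H1 H2).
apply/andP; split.
  apply: le_trans (ub_le_sup hub _); last by exists 0%N.
  by case/andP: (rw_bounds X 0 [::] s H1 H2).
apply: ge_sup; first by exists (reach_within delta X pi1 pi2 0 [::] s); exists 0%N.
apply/ubP => r [n ->]; by case/andP: (rw_bounds X n [::] s H1 H2).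
Qed.

Lemma some_strat2 : exists pi2 : @strategy R S M, is_strategy G2 pi2.
Proof.
have H : forall s, exists b, b \in G2 s /\ True.
  move=> s; have := (proj1 (proj2 Hcgs)) s; case/set0Pn => b hb; by exists b.
have [bs Hbs] := choice H.
exists (memo2 bs); apply: memo2_strat => s; by case: (Hbs s).
Qed.

Lemma v_ge0 (X : {set S}) pi1 s : is_strategy G1 pi1 -> 0 <= val1_strat delta G2 X pi1 s.
Proof.
move=> H1; have [pi2 H2] := some_strat2.
apply: lb_le_inf; first by exists (prob_reach delta X pi1 pi2 s); exists pi2.
move=> r [pi [hpi ->]]; by case/andP: (pr_bounds X s H1 hpi).
Qed.

Lemma v_le_pr (X : {set S}) pi1 pi2 s : is_strategy G1 pi1 -> is_strategy G2 pi2 ->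
  val1_strat delta G2 X pi1 s <= prob_reach delta X pi1 pi2 s.
Proof.
move=> H1 H2; apply: ge_inf; last by exists pi2.
exists 0 => r [pi [hpi ->]]; by case/andP: (pr_bounds X s H1 hpi).
Qed.

Definition glue (sig0 : @strategy R S M) (f : S -> @strategy R S M) : @strategy R S M :=
  fun h s' => match h with [::] => sig0 [::] s' | _ :: h' => f (head s' h') h' s' end.

Lemma glue_rw (X : {set S}) (xi : @selector R S M) sig0 f n x h t :
  reach_within delta X (memoryless xi) (glue sig0 f) n (x :: h) t =
  reach_within delta X (memoryless xi) (f (head t h)) n h t.
Proof.
elim: n h t => [|n IH] h t //=.
case: ifP => // _.
apply: eq_bigr => a _; apply: eq_bigr => c _; apply: eq_bigr => t' _.
rewrite IH; congr (_ * reach_within _ _ _ (f _) _ _ _).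
by case: h.
Qed.


Lemma dsum_le (xi : @selector R S M) s b (f g : S -> R) :
  is_selector G1 xi -> b \in G2 s -> (forall t, f t <= g t) ->
  \sum_a \sum_t xi s a * delta s a b t * f t <= \sum_a \sum_t xi s a * delta s a b t * g t.
Proof.
move=> Hxi hb Hfg; apply: ler_sum => a _; apply: ler_sum => t _.
case: (boolP (a \in G1 s)) => ha; last first.
  by case: (Hxi s) => _ /(_ a ha) ->; rewrite !mul0r.
apply: ler_wpM2l => //; apply: mulr_ge0; first by case: (Hxi s) => [[+ _] _].
by case: Hcgs => _ [_ /(_ s a b ha hb) [pd _]].
Qed.

Lemma dsum_w (xi : @selector R S M) s b :
  is_selector G1 xi -> b \in G2 s ->
  \sum_a \sum_t xi s a * delta s a b t = 1.
Proof.
move=> Hxi hb.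
case: (Hxi s) => [[_ hs1] z1]; rewrite -[RHS]hs1.
apply: eq_bigr => a _; rewrite -mulr_sumr.
case: (boolP (a \in G1 s)) => ha; last by rewrite z1 // mul0r.
by case: Hcgs => _ [_ /(_ s a b ha hb) [_ ->]]; rewrite mulr1.
Qed.

Lemma dsum_addc (xi : @selector R S M) s b (f : S -> R) c :
  is_selector G1 xi -> b \in G2 s ->
  \sum_a \sum_t xi s a * delta s a b t * (f t + c) =
  \sum_a \sum_t xi s a * delta s a b t * f t + c.
Proof.
move=> Hxi hb.
under eq_bigr => a _ do under eq_bigr => t _ do rewrite mulrDr.
under eq_bigr => a _ do rewrite big_split /=.
rewrite big_split /=; congr (_ + _).
rewrite -[RHS]mul1r -(dsum_w Hxi hb) mulr_suml.
by apply: eq_bigr => a _; rewrite mulr_suml.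
Qed.

Lemma dsum_c (xi : @selector R S M) s b c :
  is_selector G1 xi -> b \in G2 s ->
  \sum_a \sum_t xi s a * delta s a b t * c = c.
Proof.
move=> Hxi hb; rewrite -[RHS]mul1r -(dsum_w Hxi hb) mulr_suml.
by apply: eq_bigr => a _; rewrite mulr_suml.
Qed.

Lemma dsum_ge0 (xi : @selector R S M) s b (f : S -> R) :
  is_selector G1 xi -> b \in G2 s -> (forall t, 0 <= f t) ->
  0 <= \sum_a \sum_t xi s a * delta s a b t * f t.
Proof.
move=> Hxi hb Hf.
have := dsum_le Hxi hb (f := fun _ => 0) Hf.
by rewrite big1 // => a _; rewrite big1 // => t _; rewrite mulr0.
Qed.

Lemma bellman (xi : @selector R S M) (T : {set S}) s b :
  is_selector G1 xi -> s \notin T -> b \in G2 s ->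
  val1_strat delta G2 T (memoryless xi) s <=
  \sum_a \sum_t xi s a * delta s a b t * val1_strat delta G2 T (memoryless xi) t.
Proof.
move=> Hxi hs hb.
have H1 : is_strategy G1 (memoryless xi) by move=> h s'; exact: Hxi.
set v := val1_strat delta G2 T (memoryless xi).
have Hv0 : forall t, 0 <= v t by move=> t; exact: v_ge0.
apply/ler_addgt0Pr => e he.
have Hf : forall t, exists pi, is_strategy G2 pi /\
    prob_reach delta T (memoryless xi) pi t < v t + e.
  move=> t; have [pi0 H0] := some_strat2.
  have hne : ([set r | exists pi, is_strategy G2 pi /\
      r = prob_reach delta T (memoryless xi) pi t]%classic !=set0)%classic.
    by exists (prob_reach delta T (memoryless xi) pi0 t); exists pi0.
  have := inf_lt hne (x := v t + e); rewrite -/(val1_strat delta G2 T (memoryless xi) t) -/(v t).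
  case; first by rewrite ltrDl.
  move=> r [pi [hpi ->]] hr; by exists pi.
have [f Hf'] := choice Hf.
have [pi0 H0] := some_strat2.
pose sig0 : @strategy R S M := fun h s' => if s' == s then dirac b else pi0 h s'.
pose pi2' := glue sig0 f.
have H2' : is_strategy G2 pi2'.
  move=> [|x h] s' /=; last by case: (Hf' (head s' h)).
  rewrite /sig0; case: eqP => [->|_]; [exact: dirac_distr | exact: H0].
apply: le_trans (v_le_pr T s H1 H2') _.
apply: ge_sup; first by exists (reach_within delta T (memoryless xi) pi2' 0 [::] s); exists 0%N.
apply/ubP => r [n ->].
case: n => [|n] /=; rewrite (negbTE hs).
  by apply: addr_ge0; [exact: dsum_ge0 | exact: ltW].
have E0 : pi2' [::] s = dirac b by rewrite /pi2' /= /sig0 eqxx.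
have E1 : sig0 [::] s = dirac b by rewrite /sig0 eqxx.
rewrite E1 /memoryless.
under eq_bigr => a _ do under eq_bigr => c _ do under eq_bigr => t _ do rewrite glue_rw /=.
rewrite (sum_dirac (xi s) s b (fun a c t => reach_within delta T (memoryless xi) (f t) n [::] t)).
rewrite -dsum_addc //; apply: dsum_le => // t.
apply: le_trans (ltW (proj2 (Hf' t))).
have hub : has_ubound [set r | exists n, r = reach_within delta T (memoryless xi) (f t) n [::] t]%classic.
  exists 1; apply/ubP => r0 [m ->]; by case/andP: (rw_bounds T m [::] t H1 (proj1 (Hf' t))).
by apply: (ub_le_sup hub); exists n.
Qed.


Lemma dsum_le2 (xi : @selector R S M) s b (f g : S -> R) :
  is_selector G1 xi -> b \in G2 s ->
  (forall a t, xi s a != 0 -> delta s a b t != 0 -> f t <= g t) ->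
  \sum_a \sum_t xi s a * delta s a b t * f t <= \sum_a \sum_t xi s a * delta s a b t * g t.
Proof.
move=> Hxi hb Hfg; apply: ler_sum => a _; apply: ler_sum => t _.
case: (boolP (a \in G1 s)) => ha; last first.
  by case: (Hxi s) => _ /(_ a ha) ->; rewrite !mul0r.
case: (eqVneq (xi s a) 0) => [->|h1]; first by rewrite !mul0r.
case: (eqVneq (delta s a b t) 0) => [->|h2]; first by rewrite mulr0 !mul0r.
apply: ler_wpM2l; last exact: (Hfg a t h1 h2).
apply: mulr_ge0; first by case: (Hxi s) => [[+ _] _].
by case: Hcgs => _ [_ /(_ s a b ha hb) [pd _]].
Qed.

Lemma some_sel2 : exists xi : @selector R S M, is_selector G2 xi.
Proof.
have H : forall s, exists b, b \in G2 s /\ True.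
  move=> s; have := (proj1 (proj2 Hcgs)) s; case/set0Pn => b hb; by exists b.
have [bs Hbs] := choice H.
exists (fun s => dirac (bs s)) => s; apply: dirac_distr; by case: (Hbs s).
Qed.

Lemma pre2_eq (xi1 xi2 : @selector R S M) v s :
  pre2 delta xi1 xi2 v s =
  \sum_a \sum_c \sum_t xi1 s a * xi2 s c * delta s a c t * v t.
Proof.
apply: eq_bigr => a _; apply: eq_bigr => c _; apply: eq_bigr => t _; ring.
Qed.

Lemma pre1_sel_le (xi1 : @selector R S M) (v : S -> R) s b :
  is_selector G1 xi1 -> b \in G2 s -> (forall t, 0 <= v t) ->
  pre1_sel delta G2 xi1 v s <= \sum_a \sum_t xi1 s a * delta s a b t * v t.
Proof.
move=> H1 hb Hv.
have [xi0 H0] := some_sel2.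
pose sg : @selector R S M := fun s' => if s' == s then dirac b else xi0 s'.
have Hsg : is_selector G2 sg.
  move=> s'; rewrite /sg; case: eqP => [->|_]; [exact: dirac_distr | exact: H0].
have hlb : has_lbound [set r | exists xi2, is_selector G2 xi2 /\
      r = pre2 delta xi1 xi2 v s]%classic.
  exists 0 => r [xi2 [h2 ->]]; rewrite pre2_eq.
  apply: sumr_ge0 => a _; apply: sumr_ge0 => c _; apply: sumr_ge0 => t _.
  by apply: mulr_ge0; [exact: term_ge0 | exact: Hv].
apply: le_trans (ge_inf hlb (ex_intro _ sg (conj Hsg erefl))) _.
rewrite pre2_eq /sg eqxx.
by rewrite (sum_dirac (xi1 s) s b (fun a c t => v t)).
Qed.

Lemma uniform_sel : is_selector G1 (uniform_selector G1 : @selector R S M).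
Proof.
move=> s; split; first split.
- move=> a; rewrite ffunE; case: ifP => // _; by rewrite invr_ge0 ler0n.
- under eq_bigr => a _ do rewrite ffunE.
  rewrite -big_mkcond /= sumr_const -[(#|G1 s|%:R^-1) *+ #|G1 s|]mulr_natr mulVf //.
  rewrite pnatr_eq0 -lt0n card_gt0; exact: (proj1 Hcgs).
- by move=> a ha; rewrite ffunE (negbTE ha).
Qed.

Lemma fin_max (X : finType) (K : {set X}) (f : X -> R) :
  K != finset.set0 -> exists2 x, x \in K & forall y, y \in K -> f y <= f x.
Proof.
move=> hK.
suff [x hx Hx] : exists2 x, x \in enum K & forall y, y \in enum K -> f y <= f x.
  exists x; first by rewrite -mem_enum.
  by move=> y hy; apply: Hx; rewrite mem_enum.
have : enum K != [::].
  case/set0Pn: hK => x hx; apply/eqP => e; by move: hx; rewrite -mem_enum e.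
elim: (enum K) => [//|y l IH] _.
case: (eqVneq l [::]) => [->|hl].
  by exists y; rewrite ?inE // => z; rewrite inE => /eqP ->.
have [x hx Hx] := IH hl.
case: (lerP (f x) (f y)) => hxy.
  exists y; first by rewrite inE eqxx.
  move=> z; rewrite inE; case/orP => [/eqP -> //|hz]; exact: le_trans (Hx z hz) hxy.
exists x; first by rewrite inE hx orbT.
move=> z; rewrite inE; case/orP => [/eqP ->|hz]; [exact: ltW | exact: Hx].
Qed.

End Aux.

Lemma sels (R : realType) (S M : finType)
  (G1 G2 : S -> {set M}) (delta : S -> M -> M -> {ffun S -> R}) (T : {set S})
  (Hcgs : is_cgs G1 G2 delta)
  (gam : nat -> @selector R S M)
  (Hgam0 : gam 0%N = uniform_selector G1)
  (i : nat)
  (Hrun : forall j, (j <= i)%N -> improve_step delta G1 G2 T (gam j) (gam j.+1)) :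
  forall j, (j <= i.+1)%N -> is_selector G1 (gam j).
Proof.
elim=> [|j IH] hj; first by rewrite Hgam0; exact: (uniform_sel Hcgs).
have := Hrun j hj; rewrite /improve_step => -[_ [xi1 [Hxi1 [_ Hdef]]]].
move=> s; rewrite Hdef; case: ifP => _; first exact: Hxi1.
exact: (IH (ltnW hj) s).
Qed.

Unset Implicit Arguments.
Set Strict Implicit.

Theorem lemma6 (R : realType) (S M : finType)
  (G1 G2 : S -> {set M}) (delta : S -> M -> M -> {ffun S -> R}) (T : {set S})
  (Hcgs : is_cgs G1 G2 delta)
  (Habs : absorbing delta G1 G2 (T :|: W2 delta G1 G2 T))
  (gam : nat -> @selector R S M)
  (Hgam0 : gam 0%N = uniform_selector G1)
  (i : nat)
  (Hrun : forall j, (j <= i)%N -> improve_step delta G1 G2 T (gam j) (gam j.+1)) :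
  proper_selector delta G1 G2 T (gam i) ->
  proper_selector delta G1 G2 T (gam i.+1).
Proof.
move=> Hprop.
have Hsel := sels Hcgs Hgam0 Hrun.
have Hg : is_selector G1 (gam i) by apply: Hsel; exact: leqW.
have Hg' : is_selector G1 (gam i.+1) by apply: Hsel.
set A := T :|: W2 delta G1 G2 T.
have hTA : forall s, s \notin A -> s \notin T.
  by move=> s; rewrite /A inE negb_or => /andP [].
have Hnt : forall K : {set S}, K != finset.set0 -> ~ is_trap G2 delta (gam i) A K.
  move=> K hK Htr.
  have [pi2 [H2 Hz]] := trap_zero Hcgs Hg Htr.
  case/set0Pn: hK => s hs.
  have [hsA _] := Htr s hs.
  have := Hprop pi2 H2 s hsA; rewrite /prob_reach.
  have : sup [set r | exists n, r = reach_within delta A (memoryless (gam i)) pi2 n [::] s]%classic <= 0.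
    apply: ge_sup; first by exists (reach_within delta A (memoryless (gam i)) pi2 0 [::] s); exists 0%N.
    by apply/ubP => r [n ->]; rewrite Hz.
  move=> hle he; rewrite he in hle; by move: hle; rewrite ler10.
have [_ [xi1 [Hxi1 [Hpre Hdef]]]] := Hrun i (leqnn i).
move: Hpre Hdef.
set v := val1_strat delta G2 T (memoryless (gam i)).
set I := improve_set delta G1 G2 T v.
move=> Hpre Hdef.
have Hv0 : forall t, 0 <= v t by move=> t; apply: (v_ge0 Hcgs) => h s; exact: Hg.
move=> pi2 H2 s hsA.
apply: (notrap_reach Hcgs Hg') => // K hK Htr.
have [sm hsm Hsm] := fin_max v hK.
pose K' := [set s in K | v s == v sm].
apply: (Hnt K').
  by apply/set0Pn; exists sm; rewrite inE hsm eqxx.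
move=> s'; rewrite inE => /andP [hs' /eqP hv].
have [hA [b [hb Hcl]]] := Htr s' hs'.
split=> //.
set W := \sum_a \sum_t gam i.+1 s' a * delta s' a b t * v t.
have hWm : W <= v sm.
  have hc : forall a t, gam i.+1 s' a != 0 -> delta s' a b t != 0 -> v t <= v sm.
    move=> a t ha hd; exact: (Hsm t (Hcl a t ha hd)).
  rewrite /W; apply: le_trans (dsum_le2 (g := fun _ => v sm) Hcgs Hg' hb hc) _.

  by rewrite (dsum_c Hcgs _ Hg' hb).
have hI : s' \notin I.
  apply/negP => hI.
  have h1 : v s' < W.
    have hI' := hI; have := Hpre s' hI; rewrite /I /improve_set inE in hI'.
    case/andP: hI' => _ hlt hpre.
    apply: lt_le_trans hlt _; rewrite -hpre.
    rewrite /W Hdef hI.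
    exact: (pre1_sel_le Hcgs Hxi1 hb Hv0).
  by move: (lt_le_trans h1 hWm); rewrite hv ltxx.
have Hgs : gam i.+1 s' = gam i s' by rewrite Hdef (negbTE hI).
have hvW : v s' <= W.
  rewrite /W Hgs; exact: (bellman Hcgs Hg (hTA _ hA) hb).
exists b; split=> // a t ha hd.
have ha' : gam i.+1 s' a != 0 by rewrite Hgs.
have htK := Hcl a t ha' hd.
rewrite inE htK /=; apply/eqP.
have Heq : W = v sm by apply/eqP; rewrite eq_le hWm -hv hvW.
set w := fun a t => gam i.+1 s' a * delta s' a b t.
have Hnn : forall a t, 0 <= w a t * (v sm - v t).
  move=> a0 t0; rewrite /w.
  case: (boolP (a0 \in G1 s')) => ha0; last first.
    by case: (Hg' s') => _ /(_ a0 ha0) ->; rewrite !mul0r.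
  case: (eqVneq (gam i.+1 s' a0) 0) => [->|h1]; first by rewrite !mul0r.
  case: (eqVneq (delta s' a0 b t0) 0) => [->|h2]; first by rewrite mulr0 !mul0r.
  apply: mulr_ge0; last by rewrite subr_ge0; exact: (Hsm t0 (Hcl a0 t0 h1 h2)).
  apply: mulr_ge0; first by case: (Hg' s') => [[+ _] _].
  by case: Hcgs => _ [_ /(_ s' a0 b ha0 hb) [pd _]].
have Hsum0 : \sum_a \sum_t w a t * (v sm - v t) = 0.
  rewrite /w.
  under eq_bigr => a0 _ do under eq_bigr => t0 _ do rewrite mulrBr.
  under eq_bigr => a0 _ do rewrite sumrB.
  by rewrite sumrB (dsum_c Hcgs _ Hg' hb) -/W Heq subrr.
have Hz1 := psumr_eq0P (fun a0 _ => sumr_ge0 _ (fun t0 _ => Hnn a0 t0)) Hsum0.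
have Hz2 := psumr_eq0P (fun t0 _ => Hnn a t0) (Hz1 a isT).
have := Hz2 t isT; move/eqP; rewrite mulf_eq0 /w mulf_eq0 (negbTE ha') (negbTE hd) /=.
by rewrite subr_eq0 => /eqP ->.
Qed.
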